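(* Let $k\ge2$ and $n\ge3$. If $k$ is even, then $\mathcal{F}_{n,k}(x)$ has no nonzero real roots. If $k$ is odd, then $\mathcal{F}_{n,k}(x)$ has no positive real roots.
   Context: For $k\ge2$ and $n\ge1$, the polynomials $\mathcal{F}_{n,k}(x)$ are defined by $\mathcal{F}_{1,k}=1$, $\mathcal{F}_{n,k}=0$ for $n=0,-1,\dots,-(k-2)$, and $\mathcal{F}_{n,k}(x)=x^{k-1}\mathcal{F}_{n-1,k}(x)+x^{k-2}\mathcal{F}_{n-2,k}(x)+\dots+\mathcal{F}_{n-k,k}(x)$ for $n\ge2$. *)

(* Defs.v *)
From mathcomp Require Import all_boot all_order all_algebra.
Set Implicit Arguments. Unset Strict Implicit. Unset Printing Implicit Defensive.
Import GRing.Theory Num.Theory.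
Local Open Scope ring_scope.

(* Shifted index: Gseq R k j = F_{j - (k-2), k} for j : nat, so that the
   initial values F_{0},...,F_{-(k-2)} = 0 correspond to j = 0..k-2, and
   F_1 = 1 corresponds to j = k-1.
   Gseq R k j is computed as the list [G_j; G_{j-1}; ...; G_0]. *)
Fixpoint Glist (R : nzRingType) (k : nat) (j : nat) : seq {poly R} :=
  match j with
  | 0 => [:: (if k == 1%N then 1 else 0)]
  | j'.+1 =>
      let prev := Glist R k j' in
      let gj :=
        if (j < k.-1)%N then 0
        else if j == k.-1 then 1
        else \sum_(i < k) 'X^(k.-1 - i) * nth 0 prev i in
      gj :: prev
  end.

Definition Gseq (R : nzRingType) (k j : nat) : {poly R} := head 0 (Glist R k j).

Definition Fpoly (R : nzRingType) (n k : nat) : {poly R} := Gseq R k (n + (k - 2)).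

(* Main.v *)
Require Import Defs.
From mathcomp Require Import all_boot all_order all_algebra.
From mathcomp Require Import reals.
From mathcomp Require Import zify ring lra.
Import GRing.Theory Num.Theory.
Local Open Scope ring_scope.

Lemma nth_Glist (R : nzRingType) k j i : (i <= j)%N ->
  nth 0 (Glist R k j) i = Gseq R k (j - i).
Proof.
elim: j i => [|j IH] [|i] //= hij.
by rewrite IH // subSS.
Qed.

Lemma Gseq_eq (R : nzRingType) k j : (2 <= k)%N -> Gseq R k j =
  if (j < k.-1)%N then 0 else if j == k.-1 then 1
  else \sum_(i < k) 'X^(k.-1 - i) * Gseq R k (j.-1 - i).
Proof.
case: j => [|j] hk.
  rewrite /Gseq /=. have -> : (0 < k.-1)%N by lia.
  by case: (k =P 1%N) => [e|//]; lia.
rewrite /Gseq /=. case: ifP => // h1; case: ifP => // h2.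
apply: eq_bigr => i _; congr (_ * _); apply: nth_Glist.
move/negbT: h1; move/negbT: h2; have := ltn_ord i; lia.
Qed.

Section S.
Variable R : realFieldType.
Variable k : nat.
Hypothesis hk : (2 <= k)%N.

Lemma Gpos (x : R) j : 0 < x ->
  0 <= (Gseq R k j).[x] /\ ((k.-1 <= j)%N -> 0 < (Gseq R k j).[x]).
Proof.
move=> x0; elim/ltn_ind: j => j IH.
rewrite Gseq_eq //; case: ifP => h1.
  by rewrite horner0; split => // h; lia.
case: ifP => h2; first by rewrite hornerC; split => //; lra.
have hk0 : (0 < k)%N by lia.
rewrite horner_sum (bigD1 (Ordinal hk0)) //=.
have hpos : 0 < ('X^(k.-1 - 0) * Gseq R k (j.-1 - 0)).[x].
  rewrite hornerM hornerXn; apply: mulr_gt0; first exact: exprn_gt0.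
  apply: (IH _ _).2; move/negbT: h1; move/negbT: h2; lia.
have hrest : 0 <= \sum_(i < k | i != Ordinal hk0) ('X^(k.-1 - i) * Gseq R k (j.-1 - i)).[x].
  apply: sumr_ge0 => i _; rewrite hornerM hornerXn; apply: mulr_ge0.
    by apply: exprn_ge0; lra.
  apply: (IH _ _).1; move/negbT: h1; move/negbT: h2; have := ltn_ord i; lia.
split; [|move=> _]; lra.
Qed.

Lemma Gsym (x : R) j : ~~ odd k ->
  (Gseq R k j).[-x] = (-1) ^+ j.+1 * (Gseq R k j).[x].
Proof.
move=> ke; elim/ltn_ind: j => j IH.
rewrite Gseq_eq //; case: ifP => h1; first by rewrite !horner0 mulr0.
case: ifP => h2.
  rewrite !hornerC mulr1 -signr_odd.
  have : odd j.+1 = false.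
    move/eqP: h2 => ->; move: ke; case: k hk => // k' _ /=; by case: (odd k').
  by move=> ->; rewrite expr0.
rewrite !horner_sum mulr_sumr; apply: eq_bigr => i _.
rewrite !hornerM !hornerXn IH; last by move/negbT: h1; move/negbT: h2; lia.
rewrite (exprNn x) mulrACA -exprD; congr (_ * _).
have E : odd (k.-1 - i + (j.-1 - i).+1) = odd j.+1.
  have hi := ltn_ord i.
  have e : (k.-1 - i + (j.-1 - i).+1 + i.*2 = j.+1 + (k - 2))%N.
    by move/negbT: h1; move/negbT: h2; lia.
  have := congr1 odd e; rewrite oddD odd_double addbF => ->; rewrite oddD.
  have -> : (k - 2 = (k./2 - 1).*2)%N.
    rewrite doubleB -{1}(odd_double_half k) (negbTE ke) add0n; lia.
  by rewrite odd_double addbF.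
by rewrite -[LHS]signr_odd E signr_odd.
Qed.
End S.

Theorem mainTheorem15 (R : realType) (k n : nat) :
  (2 <= k)%N -> (3 <= n)%N ->
  (~~ odd k -> forall x : R, x != 0 -> ~~ root (Fpoly R n k) x) /\
  (odd k -> forall x : R, 0 < x -> ~~ root (Fpoly R n k) x).
Proof.
move=> hk hn.
have P : forall x : R, 0 < x -> (Fpoly R n k).[x] != 0.
  move=> x x0; rewrite /Fpoly; have [_ h] := @Gpos R k hk x (n + (k - 2)) x0.
  by rewrite lt0r_neq0 // h //; lia.
split=> [ke x xn0|_ x x0]; last by rewrite /root P.
rewrite /root; have [x0|x0|x0] := ltrgtP x 0; last first.
- by rewrite x0 eqxx in xn0.
- exact: P.
have := P (- x); rewrite oppr_gt0 => /(_ x0).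
rewrite /Fpoly (@Gsym R k hk) // mulf_eq0 negb_or => /andP[_ //].
Qed.
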